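(* In an automorphic loop $Q$ the following identities hold for all $x,y,z\in Q$, where $t:=(xy)/x$: (1) $\big(x/((x/y)^{-1})\big)^{-1}\,(x/y)=(x/y)^{-1}\,y^{-1}$; (2) $\Big(\big((x/(xy))^{-1}\big)/x^{-1}\Big)^{-1}\,x=x/(yx)$; (3) $\big((x\,(y/z))\,z\big)/y=\big((xz)/y\big)\,\big((z/y)^{-1}\big)$; (4) $\big((xy)/z\big)\,\big((y/z)^{-1}\big)=\Big((x/z)\,\big((y/z)^{-1}\big)\Big)\,y$; (5) $x^{-1}\Big((x/t)\,\big(((y/x)/t)^{-1}\big)\Big)=(x/t)\,\big((y/t)^{-1}\big)$; (6) $\big((x/(xy))^{-1}\big)\big/\Big((y/(xy))\,\big((x/(xy))^{-1}\big)\Big)=x$.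
   Context: A loop is a set with a binary operation in which all equations $ax=b$, $ya=b$ are uniquely solvable and which has a two-sided identity $1$. For $a\in L$, $R_a:x\mapsto xa$, $L_a:x\mapsto ax$; the inner mapping group is the stabilizer of $1$ in the group generated by all $R_a,L_a$. A loop is automorphic if every inner mapping is an automorphism. Automorphic loops are power associative, so inverses $x^{-1}$ are well defined. Notation: $u/v$ denotes the unique $z$ with $zv=u$. *)

(* Defs.v *)
(** Unique solvability is
    encoded by the left/right division operations:
      ldiv a b  (= a\b) is the unique y with a*y = b,
      rdiv b a  (= b/a) is the unique z with z*a = b. *)
Record loop := Loop {
  carrier :> Type;
  mul : carrier -> carrier -> carrier;
  ldiv : carrier -> carrier -> carrier;
  rdiv : carrier -> carrier -> carrier;
  one : carrier;
  mul_ldiv : forall a b, mul a (ldiv a b) = b;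
  ldiv_mul : forall a y, ldiv a (mul a y) = y;
  rdiv_mul_ : forall b a, mul (rdiv b a) a = b;
  mul_rdiv : forall z a, rdiv (mul z a) a = z;
  mul1l : forall x, mul one x = x;
  mul1r : forall x, mul x one = x
}.

Arguments mul {Q} : rename.
Arguments ldiv {Q} : rename.
Arguments rdiv {Q} : rename.
Arguments one {Q} : rename.

Definition Rt {Q : loop} (a : Q) : Q -> Q := fun x => mul x a.
Definition Lt {Q : loop} (a : Q) : Q -> Q := fun x => mul a x.

(** The multiplication group Mlt(Q): the group of permutations of Q generated
    by all R_a and L_a. *)
Inductive mlt (Q : loop) : (Q -> Q) -> Prop :=
  | mlt_id : mlt Q (fun x => x)
  | mlt_R : forall a f, mlt Q f -> mlt Q (fun x => Rt a (f x))
  | mlt_L : forall a f, mlt Q f -> mlt Q (fun x => Lt a (f x))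
  | mlt_Rinv : forall a f, mlt Q f -> mlt Q (fun x => rdiv (f x) a)
  | mlt_Linv : forall a f, mlt Q f -> mlt Q (fun x => ldiv a (f x)).

Definition inner_mapping (Q : loop) (f : Q -> Q) : Prop :=
  mlt Q f /\ f one = one.

(** Automorphic loop: every inner mapping is an automorphism (inner mappings
    are already bijections, being elements of Mlt(Q)). *)
Definition automorphic (Q : loop) : Prop :=
  forall f, inner_mapping Q f -> forall x y, f (mul x y) = mul (f x) (f y).

(** Inverse: x^{-1} := x \ 1 (the right inverse).  In an automorphic loop
    (indeed in any power-associative loop) this coincides with the left
    inverse 1/x and is the two-sided inverse. *)
Definition linv {Q : loop} (x : Q) : Q := ldiv x one.

(* Main.v *)
Require Import Defs.

Section S.
Variable Q : loop.
Hypothesis HQ : automorphic Q.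

Lemma mlt_comp (g f : Q -> Q) : mlt Q g -> mlt Q f -> mlt Q (fun t => g (f t)).
Proof.
  intros Hg Hf. induction Hg.
  - exact Hf.
  - exact (mlt_R Q a _ IHHg).
  - exact (mlt_L Q a _ IHHg).
  - exact (mlt_Rinv Q a _ IHHg).
  - exact (mlt_Linv Q a _ IHHg).
Qed.

Lemma inner_hom (f : Q -> Q) : mlt Q f -> f one = one ->
  forall a b, f (mul a b) = mul (f a) (f b).
Proof. intros Hm H1. apply HQ. split; assumption. Qed.

Lemma ldiv_self (p : Q) : ldiv p p = one.
Proof. transitivity (ldiv p (mul p one)). - f_equal. symmetry. apply mul1r. - apply ldiv_mul. Qed.
Lemma rdiv_self (p : Q) : rdiv p p = one.
Proof. transitivity (rdiv (mul one p) p). - f_equal. symmetry. apply mul1l. - apply mul_rdiv. Qed.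

Lemma homT (p a b : Q) : ldiv p (mul (mul a b) p) = mul (ldiv p (mul a p)) (ldiv p (mul b p)).
Proof.
  apply (inner_hom (fun t => ldiv p (mul t p))).
  - exact (mlt_Linv Q p _ (mlt_R Q p _ (mlt_id Q))).
  - simpl. rewrite mul1l. apply ldiv_self.
Qed.

Lemma homR (p q a b : Q) : rdiv (mul (mul (mul a b) p) q) (mul p q)
  = mul (rdiv (mul (mul a p) q) (mul p q)) (rdiv (mul (mul b p) q) (mul p q)).
Proof.
  apply (inner_hom (fun t => rdiv (mul (mul t p) q) (mul p q))).
  - exact (mlt_Rinv Q _ _ (mlt_R Q q _ (mlt_R Q p _ (mlt_id Q)))).
  - simpl. rewrite mul1l. apply rdiv_self.
Qed.

Lemma homL (p q a b : Q) : ldiv (mul q p) (mul q (mul p (mul a b)))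
  = mul (ldiv (mul q p) (mul q (mul p a))) (ldiv (mul q p) (mul q (mul p b))).
Proof.
  apply (inner_hom (fun t => ldiv (mul q p) (mul q (mul p t)))).
  - exact (mlt_Linv Q _ _ (mlt_L Q q _ (mlt_L Q p _ (mlt_id Q)))).
  - simpl. rewrite mul1r. apply ldiv_self.
Qed.
Lemma alpha_beta (x u : Q) : mul (ldiv x one) (mul x u) = mul (mul u (ldiv x one)) x.
Proof.
  pose proof (homT (ldiv x one) (ldiv x one) x) as H0.
  pose proof (homT (ldiv u one) (ldiv u one) x) as H1.
  pose proof (homT (ldiv u one) (ldiv u one) u) as H2.
  pose proof (homT (mul x u) (mul x u) (ldiv x one)) as H3.
  pose proof (homL x u (ldiv u one) u) as H4.
  pose proof (homR x (ldiv x one) u (ldiv x one)) as H5.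
  pose proof (homR x (ldiv u one) (ldiv u one) u) as H6.
  pose proof (homR (ldiv x one) (mul x u) x u) as H7.
  pose proof (homR (ldiv x one) (mul x u) u (mul x u)) as H8.
  pose proof (homR (ldiv x one) (mul x u) (mul u x) u) as H9.
  pose proof (mul_ldiv Q x one) as H10.
  pose proof (mul_ldiv Q (ldiv x one) (mul (mul (ldiv x one) x) (ldiv x one))) as H11.
  pose proof (ldiv_mul Q (ldiv x one) (ldiv x one)) as H12.
  pose proof (mul_ldiv Q (ldiv x one) (mul x (ldiv x one))) as H13.
  pose proof (mul_ldiv Q u one) as H14.
  pose proof (mul_ldiv Q (ldiv u one) (mul (mul (ldiv u one) x) (ldiv u one))) as H15.
  pose proof (ldiv_mul Q (ldiv u one) (ldiv u one)) as H16.
  pose proof (mul_ldiv Q (ldiv u one) (mul x (ldiv u one))) as H17.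
  pose proof (ldiv_mul Q (ldiv u one) u) as H18.
  pose proof (mul_rdiv Q (mul (ldiv u one) u) (ldiv u one)) as H19.
  pose proof (mul_ldiv Q (ldiv u one) (mul (mul (ldiv u one) u) (ldiv u one))) as H20.
  pose proof (mul_ldiv Q (ldiv u one) (mul u (ldiv u one))) as H21.
  pose proof (mul_ldiv Q (mul x u) (mul (mul (mul x u) (ldiv x one)) (mul x u))) as H22.
  pose proof (ldiv_mul Q (mul x u) (mul x u)) as H23.
  pose proof (mul_ldiv Q (mul x u) (mul (ldiv x one) (mul x u))) as H24.
  pose proof (mul_ldiv Q (mul u x) (mul u (mul x u))) as H25.
  pose proof (ldiv_mul Q (ldiv (mul u x) (mul u (mul x (ldiv u one)))) (ldiv (mul u x) (mul u (mul x u)))) as H26.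
  pose proof (mul_rdiv Q (mul (mul u (ldiv x one)) x) (ldiv x one)) as H27.
  pose proof (rdiv_mul_ Q (mul (mul (mul u (ldiv x one)) x) (ldiv x one)) (mul x (ldiv x one))) as H28.
  pose proof (rdiv_mul_ Q (mul (mul u x) (ldiv x one)) (mul x (ldiv x one))) as H29.
  pose proof (rdiv_mul_ Q (mul (mul (ldiv x one) x) (ldiv x one)) (mul x (ldiv x one))) as H30.
  pose proof (mul_rdiv Q (rdiv (mul (mul u x) (ldiv x one)) (mul x (ldiv x one))) (rdiv (mul (mul (ldiv x one) x) (ldiv x one)) (mul x (ldiv x one)))) as H31.
  pose proof (ldiv_mul Q (mul u x) (ldiv u one)) as H32.
  pose proof (rdiv_mul_ Q (mul (mul u x) (ldiv u one)) (mul x (ldiv u one))) as H33.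
  pose proof (ldiv_mul Q (rdiv (mul (mul (ldiv u one) x) (ldiv u one)) (mul x (ldiv u one))) (rdiv (mul (mul u x) (ldiv u one)) (mul x (ldiv u one)))) as H34.
  pose proof (rdiv_mul_ Q (mul (mul x (ldiv x one)) (mul x u)) (mul (ldiv x one) (mul x u))) as H35.
  pose proof (ldiv_mul Q (rdiv (mul (mul x (ldiv x one)) (mul x u)) (mul (ldiv x one) (mul x u))) (rdiv (mul (mul u (ldiv x one)) (mul x u)) (mul (ldiv x one) (mul x u)))) as H36.
  pose proof (mul_rdiv Q (rdiv (mul (mul u (ldiv x one)) (mul x u)) (mul (ldiv x one) (mul x u))) (mul (rdiv (mul (mul x (ldiv x one)) (mul x u)) (mul (ldiv x one) (mul x u))) (rdiv (mul (mul u (ldiv x one)) (mul x u)) (mul (ldiv x one) (mul x u))))) as H37.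
  pose proof (mul_rdiv Q (mul (mul u x) (ldiv x one)) (mul x u)) as H38.
  pose proof (rdiv_mul_ Q (mul (mul (mul u x) (ldiv x one)) (mul x u)) (mul (ldiv x one) (mul x u))) as H39.
  pose proof (mul1l Q x) as H40.
  pose proof (mul1r Q (ldiv x one)) as H41.
  pose proof (mul1r Q (mul u x)) as H42.
  pose proof (mul1r Q (rdiv (mul (mul u x) (ldiv x one)) (mul x (ldiv x one)))) as H43.
  pose proof (mul1r Q (rdiv (mul (mul (ldiv x one) x) (ldiv x one)) (mul x (ldiv x one)))) as H44.
  pose proof (mul1r Q (mul (rdiv (mul (mul u x) (ldiv x one)) (mul x (ldiv x one))) (rdiv (mul (mul (ldiv x one) x) (ldiv x one)) (mul x (ldiv x one))))) as H45.
  pose proof (mul1r Q (mul (mul (ldiv u one) u) x)) as H46.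
  pose proof (mul1l Q (mul (mul (mul (ldiv u one) u) x) (ldiv u one))) as H47.
  pose proof (mul1l Q (rdiv (mul (mul (ldiv u one) x) (ldiv u one)) (mul x (ldiv u one)))) as H48.
  pose proof (mul1r Q (rdiv (mul (mul (ldiv u one) x) (ldiv u one)) (mul x (ldiv u one)))) as H49.
  pose proof (mul1l Q (rdiv (mul (mul (mul x u) (ldiv x one)) (mul x u)) (mul (ldiv x one) (mul x u)))) as H50.
  pose proof (mul_rdiv Q (ldiv u one) (ldiv (ldiv u one) (mul (mul (ldiv u one) x) (ldiv u one)))) as H51.
  pose proof (mul_rdiv Q (mul x u) (ldiv (mul x u) (mul (mul (mul x u) (ldiv x one)) (mul x u)))) as H52.
  pose proof (ldiv_mul Q (rdiv (mul (mul x (ldiv x one)) (mul x u)) (mul (ldiv x one) (mul x u))) (mul (ldiv x one) (mul x u))) as H53.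
  pose proof (mul_rdiv Q one (ldiv u one)) as H54.
  pose proof (mul_rdiv Q one (ldiv (ldiv u one) (mul (mul (ldiv u one) x) (ldiv u one)))) as H55.
  pose proof (ldiv_mul Q (mul u x) one) as H56.
  congruence.
Qed.
Lemma aaip (x y : Q) : (ldiv (mul x y) one) = (mul (ldiv y one) (ldiv x one)).
Proof.
  pose proof (homT (ldiv y one) (ldiv y one) y) as H0.
  pose proof (homT (mul (ldiv y one) (ldiv x one)) (mul (ldiv y one) (ldiv x one)) x) as H1.
  pose proof (homT (mul (ldiv y one) (ldiv x one)) (mul (ldiv y one) (ldiv x one)) (mul x y)) as H2.
  pose proof (homL x (mul (ldiv y one) (ldiv x one)) (ldiv y one) y) as H3.
  pose proof (homL x (mul (ldiv y one) (ldiv x one)) (ldiv y one) (ldiv x one)) as H4.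
  pose proof (mul_ldiv Q y one) as H5.
  pose proof (mul_rdiv Q (mul (ldiv y one) y) (ldiv y one)) as H6.
  pose proof (mul_ldiv Q (ldiv y one) (mul (mul (ldiv y one) y) (ldiv y one))) as H7.
  pose proof (ldiv_mul Q (ldiv y one) (ldiv y one)) as H8.
  pose proof (mul_ldiv Q (ldiv y one) (mul y (ldiv y one))) as H9.
  pose proof (mul_ldiv Q x one) as H10.
  pose proof (ldiv_mul Q (mul (mul (ldiv y one) (ldiv x one)) x) (mul (ldiv y one) (ldiv x one))) as H11.
  pose proof (mul_ldiv Q (mul (ldiv y one) (ldiv x one)) (mul (mul (mul (ldiv y one) (ldiv x one)) x) (mul (ldiv y one) (ldiv x one)))) as H12.
  pose proof (ldiv_mul Q (mul (ldiv y one) (ldiv x one)) (mul (ldiv y one) (ldiv x one))) as H13.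
  pose proof (mul_ldiv Q (mul (ldiv y one) (ldiv x one)) (mul x (mul (ldiv y one) (ldiv x one)))) as H14.
  pose proof (ldiv_mul Q (mul x y) (mul (ldiv y one) (ldiv x one))) as H15.
  pose proof (mul_ldiv Q (mul (ldiv y one) (ldiv x one)) (mul (mul x y) (mul (ldiv y one) (ldiv x one)))) as H16.
  pose proof (mul_ldiv Q (mul (mul (ldiv y one) (ldiv x one)) x) (mul (mul (ldiv y one) (ldiv x one)) (mul x y))) as H17.
  pose proof (ldiv_mul Q (mul (ldiv y one) (ldiv x one)) (mul x (ldiv x one))) as H18.
  pose proof (mul_ldiv Q (mul (mul (ldiv y one) (ldiv x one)) x) (mul (mul (ldiv y one) (ldiv x one)) (mul x (ldiv x one)))) as H19.
  pose proof (mul_rdiv Q (ldiv (mul (mul (ldiv y one) (ldiv x one)) x) (mul (mul (ldiv y one) (ldiv x one)) (mul x (ldiv y one)))) (ldiv (mul (mul (ldiv y one) (ldiv x one)) x) (mul (mul (ldiv y one) (ldiv x one)) (mul x (ldiv x one))))) as H20.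
  pose proof (mul1l Q (ldiv y one)) as H21.
  pose proof (mul1r Q (ldiv y one)) as H22.
  pose proof (mul1r Q x) as H23.
  pose proof (mul1l Q (mul (ldiv y one) (ldiv x one))) as H24.
  pose proof (mul1r Q (mul (ldiv y one) (ldiv x one))) as H25.
  pose proof (mul1r Q (mul (mul (ldiv y one) (ldiv x one)) x)) as H26.
  pose proof (mul_rdiv Q (mul (mul (ldiv y one) (ldiv x one)) x) (ldiv (mul (mul (ldiv y one) (ldiv x one)) x) (mul (mul (ldiv y one) (ldiv x one)) (mul x (ldiv x one))))) as H27.
  pose proof (mul_rdiv Q one (ldiv y one)) as H28.
  pose proof (ldiv_mul Q (mul (mul (ldiv y one) (ldiv x one)) x) one) as H29.
  congruence.
Qed.
Lemma inv_inv (x : Q) : (ldiv (ldiv x one) one) = x.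
Proof.
  pose proof (aaip (ldiv (ldiv x one) one) (ldiv x one)) as H0.
  pose proof (mul_ldiv Q x one) as H1.
  pose proof (mul_rdiv Q (ldiv (ldiv x one) one) (ldiv x one)) as H2.
  pose proof (mul_ldiv Q (mul (ldiv (ldiv x one) one) (ldiv x one)) one) as H3.
  pose proof (mul_ldiv Q (ldiv (ldiv x one) one) one) as H4.
  pose proof (mul1r Q (mul (ldiv (ldiv x one) one) (ldiv (ldiv (ldiv x one) one) one))) as H5.
  pose proof (mul_rdiv Q x (ldiv x one)) as H6.
  pose proof (mul_rdiv Q (mul (ldiv (ldiv x one) one) (ldiv x one)) (ldiv (mul (ldiv (ldiv x one) one) (ldiv x one)) one)) as H7.
  pose proof (mul_rdiv Q one one) as H8.
  congruence.
Qed.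
Lemma inv_rd (x y : Q) : (ldiv (rdiv x y) one) = (ldiv (ldiv y one) (ldiv x one)).
Proof.
  pose proof (aaip (rdiv x y) y) as H0.
  pose proof (rdiv_mul_ Q x y) as H1.
  pose proof (ldiv_mul Q (ldiv y one) (ldiv (rdiv x y) one)) as H2.
  congruence.
Qed.
Lemma inv_ld (x y : Q) : (ldiv (ldiv x y) one) = (rdiv (ldiv y one) (ldiv x one)).
Proof.
  pose proof (aaip x (ldiv x y)) as H0.
  pose proof (mul_ldiv Q x y) as H1.
  pose proof (mul_rdiv Q (ldiv (ldiv x y) one) (ldiv x one)) as H2.
  congruence.
Qed.
Lemma linv_l (x : Q) : (rdiv one x) = (ldiv x one).
Proof.
  pose proof (aaip (rdiv one x) x) as H0.
  pose proof (rdiv_mul_ Q one x) as H1.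
  pose proof (ldiv_mul Q (rdiv one x) x) as H2.
  pose proof (mul_ldiv Q (mul (rdiv one x) x) one) as H3.
  pose proof (mul_rdiv Q (ldiv x one) (ldiv (rdiv one x) one)) as H4.
  pose proof (mul1l Q (mul (ldiv x one) (ldiv (rdiv one x) one))) as H5.
  congruence.
Qed.
Lemma id1 (x y : Q) : (mul (ldiv (rdiv x (ldiv (rdiv x y) one)) one) (rdiv x y)) = (mul (ldiv (rdiv x y) one) (ldiv y one)).
Proof.
  pose proof (homT (ldiv (rdiv x y) one) (ldiv (rdiv x y) one) (ldiv y one)) as H0.
  pose proof (homT (ldiv (rdiv x y) one) (ldiv (rdiv x y) one) (rdiv x (ldiv (rdiv x y) one))) as H1.
  pose proof (homT (rdiv x y) x (ldiv x one)) as H2.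
  pose proof (aaip (ldiv x one) (rdiv x y)) as H3.
  pose proof (aaip (mul (ldiv (rdiv x (ldiv (rdiv x y) one)) one) (rdiv x y)) (ldiv (rdiv x y) one)) as H4.
  pose proof (aaip (ldiv (rdiv x (ldiv (rdiv x y) one)) one) (rdiv x y)) as H5.
  pose proof (aaip (rdiv x (ldiv (rdiv x y) one)) (ldiv (rdiv x (ldiv (rdiv x y) one)) one)) as H6.
  pose proof (aaip (rdiv x (ldiv (rdiv x y) one)) (ldiv (rdiv x y) one)) as H7.
  pose proof (aaip (ldiv (rdiv x y) one) (ldiv x one)) as H8.
  pose proof (aaip (ldiv (rdiv x y) one) (rdiv x (ldiv (rdiv x y) one))) as H9.
  pose proof (aaip (ldiv (rdiv x y) one) (rdiv x y)) as H10.
  pose proof (aaip (rdiv x y) y) as H11.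
  pose proof (aaip (rdiv x y) (mul (ldiv (rdiv x (ldiv (rdiv x y) one)) one) (rdiv x y))) as H12.
  pose proof (aaip (rdiv x y) (ldiv (rdiv x (ldiv (rdiv x y) one)) one)) as H13.
  pose proof (rdiv_mul_ Q x y) as H14.
  pose proof (mul_rdiv Q (mul (ldiv (rdiv x y) one) (ldiv y one)) (ldiv (rdiv x y) one)) as H15.
  pose proof (mul_ldiv Q (ldiv (rdiv x y) one) (mul (mul (ldiv (rdiv x y) one) (ldiv y one)) (ldiv (rdiv x y) one))) as H16.
  pose proof (ldiv_mul Q (ldiv (rdiv x y) one) (ldiv (rdiv x y) one)) as H17.
  pose proof (mul_ldiv Q (ldiv (rdiv x y) one) (mul (ldiv y one) (ldiv (rdiv x y) one))) as H18.
  pose proof (rdiv_mul_ Q x (ldiv (rdiv x y) one)) as H19.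
  pose proof (mul_ldiv Q (ldiv (rdiv x y) one) (mul (mul (ldiv (rdiv x y) one) (rdiv x (ldiv (rdiv x y) one))) (ldiv (rdiv x y) one))) as H20.
  pose proof (mul_ldiv Q (ldiv (rdiv x y) one) (mul (rdiv x (ldiv (rdiv x y) one)) (ldiv (rdiv x y) one))) as H21.
  pose proof (mul_ldiv Q (rdiv x y) (mul x (rdiv x y))) as H22.
  pose proof (mul_rdiv Q (ldiv (rdiv x y) (mul x (rdiv x y))) (ldiv (rdiv x y) (mul (ldiv x one) (rdiv x y)))) as H23.
  pose proof (mul_ldiv Q (mul (ldiv x one) (rdiv x y)) one) as H24.
  pose proof (mul_ldiv Q (rdiv x (ldiv (rdiv x y) one)) one) as H25.
  pose proof (mul_rdiv Q (mul (ldiv (rdiv x (ldiv (rdiv x y) one)) one) (rdiv x y)) (ldiv (rdiv x y) one)) as H26.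
  pose proof (mul_ldiv Q (mul (mul (ldiv (rdiv x (ldiv (rdiv x y) one)) one) (rdiv x y)) (ldiv (rdiv x y) one)) one) as H27.
  pose proof (mul_ldiv Q (ldiv (rdiv x y) one) one) as H28.
  pose proof (mul_rdiv Q (rdiv x (ldiv (rdiv x y) one)) (ldiv (rdiv x (ldiv (rdiv x y) one)) one)) as H29.
  pose proof (mul_rdiv Q (ldiv (ldiv (rdiv x (ldiv (rdiv x y) one)) one) one) (ldiv (rdiv x (ldiv (rdiv x y) one)) one)) as H30.
  pose proof (mul_ldiv Q (mul (rdiv x (ldiv (rdiv x y) one)) (ldiv (rdiv x y) one)) one) as H31.
  pose proof (mul_ldiv Q (mul (ldiv (rdiv x y) one) (ldiv x one)) one) as H32.
  pose proof (mul_ldiv Q (mul (ldiv (rdiv x y) one) (rdiv x (ldiv (rdiv x y) one))) one) as H33.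
  pose proof (ldiv_mul Q (ldiv (rdiv x y) one) (rdiv x y)) as H34.
  pose proof (mul_ldiv Q (mul (ldiv (rdiv x y) one) (rdiv x y)) one) as H35.
  pose proof (ldiv_mul Q (rdiv x y) (mul (ldiv (rdiv x (ldiv (rdiv x y) one)) one) (rdiv x y))) as H36.
  pose proof (mul_ldiv Q (mul (rdiv x y) (mul (ldiv (rdiv x (ldiv (rdiv x y) one)) one) (rdiv x y))) one) as H37.
  pose proof (mul1r Q (mul x (ldiv x one))) as H38.
  pose proof (mul1r Q (mul (mul x (ldiv x one)) (rdiv x y))) as H39.
  pose proof (mul1l Q (ldiv (ldiv (rdiv x y) one) one)) as H40.
  pose proof (mul_rdiv Q (mul (ldiv x one) (rdiv x y)) (ldiv (mul (ldiv x one) (rdiv x y)) one)) as H41.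
  pose proof (mul_rdiv Q (mul (mul (ldiv (rdiv x (ldiv (rdiv x y) one)) one) (rdiv x y)) (ldiv (rdiv x y) one)) (ldiv (mul (mul (ldiv (rdiv x (ldiv (rdiv x y) one)) one) (rdiv x y)) (ldiv (rdiv x y) one)) one)) as H42.
  pose proof (mul_rdiv Q (mul (rdiv x (ldiv (rdiv x y) one)) (ldiv (rdiv x (ldiv (rdiv x y) one)) one)) (ldiv (mul (rdiv x (ldiv (rdiv x y) one)) (ldiv (rdiv x (ldiv (rdiv x y) one)) one)) one)) as H43.
  pose proof (mul_rdiv Q (mul (ldiv (rdiv x y) one) (ldiv x one)) (ldiv (mul (ldiv (rdiv x y) one) (ldiv x one)) one)) as H44.
  pose proof (mul_rdiv Q (mul (ldiv (rdiv x y) one) (rdiv x (ldiv (rdiv x y) one))) (ldiv (mul (ldiv (rdiv x y) one) (rdiv x (ldiv (rdiv x y) one))) one)) as H45.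
  pose proof (mul_rdiv Q (mul (ldiv (rdiv x y) one) (rdiv x y)) (ldiv (mul (ldiv (rdiv x y) one) (rdiv x y)) one)) as H46.
  pose proof (mul_rdiv Q (mul (rdiv x y) (mul (ldiv (rdiv x (ldiv (rdiv x y) one)) one) (rdiv x y))) (ldiv (mul (rdiv x y) (mul (ldiv (rdiv x (ldiv (rdiv x y) one)) one) (rdiv x y))) one)) as H47.
  pose proof (ldiv_mul Q (rdiv x y) one) as H48.
  pose proof (ldiv_mul Q one one) as H49.
  congruence.
Qed.
Lemma id2 (x y : Q) : (mul (ldiv (rdiv (ldiv (rdiv x (mul x y)) one) (ldiv x one)) one) x) = (rdiv x (mul y x)).
Proof.
  pose proof (homT x x y) as H0.
  pose proof (homT x x (ldiv x one)) as H1.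
  pose proof (homT x x (ldiv (rdiv (ldiv (rdiv x (mul x y)) one) (ldiv x one)) one)) as H2.
  pose proof (homT x (rdiv x (mul x y)) (mul x y)) as H3.
  pose proof (aaip (rdiv (ldiv (rdiv x (mul x y)) one) (ldiv x one)) (ldiv x one)) as H4.
  pose proof (aaip (ldiv (rdiv x (mul x y)) one) (rdiv x (mul x y))) as H5.
  pose proof (mul_ldiv Q x (mul y x)) as H6.
  pose proof (mul_ldiv Q x one) as H7.
  pose proof (ldiv_mul Q (ldiv x one) x) as H8.
  pose proof (mul_ldiv Q x (mul (ldiv x one) x)) as H9.
  pose proof (rdiv_mul_ Q x (mul x y)) as H10.
  pose proof (rdiv_mul_ Q (ldiv (rdiv x (mul x y)) one) (ldiv x one)) as H11.
  pose proof (mul_ldiv Q x (mul (ldiv (rdiv (ldiv (rdiv x (mul x y)) one) (ldiv x one)) one) x)) as H12.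
  pose proof (ldiv_mul Q (mul (rdiv x (mul x y)) (mul x y)) x) as H13.
  pose proof (mul_rdiv Q (ldiv x (mul (rdiv x (mul x y)) x)) (mul (ldiv x (mul x x)) (ldiv x (mul y x)))) as H14.
  pose proof (ldiv_mul Q (ldiv (rdiv x (mul x y)) one) (rdiv x (mul x y))) as H15.
  pose proof (mul_ldiv Q (mul (ldiv (rdiv x (mul x y)) one) (rdiv x (mul x y))) one) as H16.
  pose proof (mul_ldiv Q (ldiv (rdiv x (mul x y)) one) one) as H17.
  pose proof (mul1l Q (ldiv x (mul x x))) as H18.
  pose proof (mul1r Q (ldiv x (mul x x))) as H19.
  pose proof (mul1l Q one) as H20.
  pose proof (mul_rdiv Q (mul (ldiv (rdiv x (mul x y)) one) (rdiv x (mul x y))) (ldiv (mul (ldiv (rdiv x (mul x y)) one) (rdiv x (mul x y))) one)) as H21.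
  pose proof (ldiv_mul Q x one) as H22.
  pose proof (mul_rdiv Q one one) as H23.
  congruence.
Qed.
Lemma id3 (x y z : Q) : (rdiv (mul (mul x (rdiv y z)) z) y) = (mul (rdiv (mul x z) y) (ldiv (rdiv z y) one)).
Proof.
  pose proof (homR y (ldiv z one) (rdiv (mul x z) y) (ldiv (rdiv z y) one)) as H0.
  pose proof (homR y (ldiv z one) (rdiv z y) (ldiv (rdiv z y) one)) as H1.
  pose proof (homL (ldiv z one) z x (rdiv y z)) as H2.
  pose proof (alpha_beta (ldiv z one) x) as H3.
  pose proof (alpha_beta (ldiv z one) (mul x (rdiv y z))) as H4.
  pose proof (alpha_beta (ldiv z one) (rdiv y z)) as H5.
  pose proof (aaip (ldiv z one) z) as H6.
  pose proof (rdiv_mul_ Q (mul x z) y) as H7.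
  pose proof (rdiv_mul_ Q z y) as H8.
  pose proof (mul_ldiv Q (rdiv z y) one) as H9.
  pose proof (mul_rdiv Q (mul (rdiv (mul x z) y) (ldiv (rdiv z y) one)) y) as H10.
  pose proof (mul_ldiv Q z one) as H11.
  pose proof (mul_rdiv Q (mul (mul (rdiv (mul x z) y) (ldiv (rdiv z y) one)) y) (ldiv z one)) as H12.
  pose proof (rdiv_mul_ Q (mul (mul (mul (rdiv (mul x z) y) (ldiv (rdiv z y) one)) y) (ldiv z one)) (mul y (ldiv z one))) as H13.
  pose proof (rdiv_mul_ Q (mul (mul (rdiv (mul x z) y) y) (ldiv z one)) (mul y (ldiv z one))) as H14.
  pose proof (rdiv_mul_ Q (mul (mul (rdiv z y) y) (ldiv z one)) (mul y (ldiv z one))) as H15.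
  pose proof (ldiv_mul Q (rdiv (mul (mul (rdiv z y) y) (ldiv z one)) (mul y (ldiv z one))) (rdiv (mul (mul (ldiv (rdiv z y) one) y) (ldiv z one)) (mul y (ldiv z one)))) as H16.
  pose proof (rdiv_mul_ Q y z) as H17.
  pose proof (mul_ldiv Q (mul z (ldiv z one)) (mul z (mul (ldiv z one) (mul x (rdiv y z))))) as H18.
  pose proof (mul_ldiv Q (mul z (ldiv z one)) (mul z (mul (ldiv z one) x))) as H19.
  pose proof (mul_ldiv Q (mul z (ldiv z one)) (mul z (mul (ldiv z one) (rdiv y z)))) as H20.
  pose proof (mul_ldiv Q (ldiv z one) one) as H21.
  pose proof (mul_rdiv Q (mul (mul x (rdiv y z)) (ldiv (ldiv z one) one)) (ldiv z one)) as H22.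
  pose proof (ldiv_mul Q (ldiv z one) z) as H23.
  pose proof (mul_ldiv Q (mul (ldiv z one) z) one) as H24.
  pose proof (mul1l Q (ldiv (mul z (ldiv z one)) (mul z (mul (ldiv z one) x)))) as H25.
  pose proof (mul1l Q (ldiv (mul z (ldiv z one)) (mul z (mul (ldiv z one) (rdiv y z))))) as H26.
  pose proof (mul1l Q (mul (ldiv (mul z (ldiv z one)) (mul z (mul (ldiv z one) x))) (ldiv (mul z (ldiv z one)) (mul z (mul (ldiv z one) (rdiv y z)))))) as H27.
  pose proof (mul1l Q (mul (rdiv y z) (ldiv (ldiv z one) one))) as H28.
  pose proof (mul1r Q (mul (ldiv z one) z)) as H29.
  pose proof (ldiv_mul Q (rdiv (mul (mul (rdiv z y) y) (ldiv z one)) (mul y (ldiv z one))) (mul y (ldiv z one))) as H30.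
  pose proof (mul_rdiv Q (mul z (ldiv z one)) (ldiv (mul z (ldiv z one)) (mul z (mul (ldiv z one) (rdiv y z))))) as H31.
  congruence.
Qed.
Lemma id4 (x y z : Q) : (mul (rdiv (mul x y) z) (ldiv (rdiv y z) one)) = (mul (mul (rdiv x z) (ldiv (rdiv y z) one)) y).
Proof.
  pose proof (homT (ldiv y one) (ldiv y one) y) as H0.
  pose proof (homT (ldiv y one) (ldiv y one) z) as H1.
  pose proof (homR y (ldiv y one) x (ldiv y one)) as H2.
  pose proof (homR z (ldiv y one) y (ldiv y one)) as H3.
  pose proof (homR z (ldiv y one) (rdiv (mul x y) z) (ldiv (rdiv y z) one)) as H4.
  pose proof (homR z (ldiv y one) (rdiv y z) (ldiv (rdiv y z) one)) as H5.
  pose proof (homR z (ldiv y one) (mul (rdiv x z) (ldiv (rdiv y z) one)) y) as H6.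
  pose proof (homR z (ldiv y one) (rdiv x z) (ldiv (rdiv y z) one)) as H7.
  pose proof (mul_ldiv Q y one) as H8.
  pose proof (mul_ldiv Q (ldiv y one) (mul (mul (ldiv y one) y) (ldiv y one))) as H9.
  pose proof (ldiv_mul Q (ldiv y one) (ldiv y one)) as H10.
  pose proof (mul_rdiv Q y (ldiv y one)) as H11.
  pose proof (mul_ldiv Q (ldiv y one) (mul y (ldiv y one))) as H12.
  pose proof (mul_ldiv Q (ldiv y one) (mul (mul (ldiv y one) z) (ldiv y one))) as H13.
  pose proof (mul_ldiv Q (ldiv y one) (mul z (ldiv y one))) as H14.
  pose proof (mul_rdiv Q (mul (mul x (ldiv y one)) y) (ldiv y one)) as H15.
  pose proof (rdiv_mul_ Q (mul (mul (mul x (ldiv y one)) y) (ldiv y one)) (mul y (ldiv y one))) as H16.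
  pose proof (rdiv_mul_ Q (mul (mul x y) (ldiv y one)) (mul y (ldiv y one))) as H17.
  pose proof (rdiv_mul_ Q (mul (mul (ldiv y one) y) (ldiv y one)) (mul y (ldiv y one))) as H18.
  pose proof (mul_rdiv Q (rdiv (mul (mul x y) (ldiv y one)) (mul y (ldiv y one))) (rdiv (mul (mul (ldiv y one) y) (ldiv y one)) (mul y (ldiv y one)))) as H19.
  pose proof (mul_rdiv Q (rdiv (mul (mul y z) (ldiv y one)) (mul z (ldiv y one))) (rdiv (mul (mul (ldiv y one) z) (ldiv y one)) (mul z (ldiv y one)))) as H20.
  pose proof (rdiv_mul_ Q (mul x y) z) as H21.
  pose proof (rdiv_mul_ Q y z) as H22.
  pose proof (mul_ldiv Q (rdiv y z) one) as H23.
  pose proof (mul_rdiv Q (mul (rdiv (mul x y) z) (ldiv (rdiv y z) one)) z) as H24.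
  pose proof (mul_rdiv Q (mul (mul (rdiv (mul x y) z) (ldiv (rdiv y z) one)) z) (ldiv y one)) as H25.
  pose proof (rdiv_mul_ Q (mul (mul (mul (rdiv (mul x y) z) (ldiv (rdiv y z) one)) z) (ldiv y one)) (mul z (ldiv y one))) as H26.
  pose proof (rdiv_mul_ Q (mul (mul (rdiv (mul x y) z) z) (ldiv y one)) (mul z (ldiv y one))) as H27.
  pose proof (rdiv_mul_ Q (mul (mul (rdiv y z) z) (ldiv y one)) (mul z (ldiv y one))) as H28.
  pose proof (ldiv_mul Q (rdiv (mul (mul (rdiv y z) z) (ldiv y one)) (mul z (ldiv y one))) (rdiv (mul (mul (ldiv (rdiv y z) one) z) (ldiv y one)) (mul z (ldiv y one)))) as H29.
  pose proof (rdiv_mul_ Q x z) as H30.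
  pose proof (mul_rdiv Q (mul (mul (rdiv x z) (ldiv (rdiv y z) one)) y) z) as H31.
  pose proof (mul_rdiv Q (mul (mul (mul (rdiv x z) (ldiv (rdiv y z) one)) y) z) (ldiv y one)) as H32.
  pose proof (rdiv_mul_ Q (mul (mul (mul (mul (rdiv x z) (ldiv (rdiv y z) one)) y) z) (ldiv y one)) (mul z (ldiv y one))) as H33.
  pose proof (rdiv_mul_ Q (mul (mul (rdiv x z) z) (ldiv y one)) (mul z (ldiv y one))) as H34.
  pose proof (mul1r Q (ldiv y one)) as H35.
  pose proof (mul1l Q z) as H36.
  pose proof (mul1l Q (mul z (ldiv y one))) as H37.
  pose proof (mul1r Q (rdiv (mul (mul x y) (ldiv y one)) (mul y (ldiv y one)))) as H38.
  pose proof (mul1r Q (rdiv (mul (mul (ldiv y one) y) (ldiv y one)) (mul y (ldiv y one)))) as H39.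
  pose proof (mul1r Q (mul (rdiv (mul (mul x y) (ldiv y one)) (mul y (ldiv y one))) (rdiv (mul (mul (ldiv y one) y) (ldiv y one)) (mul y (ldiv y one))))) as H40.
  pose proof (mul_rdiv Q (ldiv y one) (ldiv (ldiv y one) (mul (mul (ldiv y one) z) (ldiv y one)))) as H41.
  pose proof (ldiv_mul Q (rdiv (mul (mul (rdiv y z) z) (ldiv y one)) (mul z (ldiv y one))) (mul z (ldiv y one))) as H42.
  pose proof (mul_rdiv Q one (ldiv (ldiv y one) (mul (mul (ldiv y one) z) (ldiv y one)))) as H43.
  congruence.
Qed.
Lemma id5 (x y : Q) : (mul (ldiv x one) (mul (rdiv x (rdiv (mul x y) x)) (ldiv (rdiv (rdiv y x) (rdiv (mul x y) x)) one))) = (mul (rdiv x (rdiv (mul x y) x)) (ldiv (rdiv y (rdiv (mul x y) x)) one)).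
Proof.
  pose proof (inv_ld (ldiv x one) (mul (ldiv x one) (mul (rdiv x (rdiv (mul x y) x)) (ldiv (rdiv (rdiv y x) (rdiv (mul x y) x)) one)))) as H0.
  pose proof (inv_ld (rdiv x (rdiv (mul x y) x)) (mul (ldiv x one) (mul (rdiv x (rdiv (mul x y) x)) (ldiv (rdiv (rdiv y x) (rdiv (mul x y) x)) one)))) as H1.
  pose proof (inv_ld (rdiv x (rdiv (mul x y) x)) (mul (rdiv x (rdiv (mul x y) x)) (ldiv (rdiv (rdiv y x) (rdiv (mul x y) x)) one))) as H2.
  pose proof (linv_l (ldiv x one)) as H3.
  pose proof (linv_l (rdiv (rdiv y x) (rdiv (mul x y) x))) as H4.
  pose proof (linv_l (rdiv y (rdiv (mul x y) x))) as H5.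
  pose proof (id4 (rdiv y x) x (rdiv (mul x y) x)) as H6.
  pose proof (mul_ldiv Q x one) as H7.
  pose proof (rdiv_mul_ Q y x) as H8.
  pose proof (ldiv_mul Q (rdiv x (rdiv (mul x y) x)) (ldiv (rdiv (rdiv y x) (rdiv (mul x y) x)) one)) as H9.
  pose proof (ldiv_mul Q (ldiv x one) (mul (rdiv x (rdiv (mul x y) x)) (ldiv (rdiv (rdiv y x) (rdiv (mul x y) x)) one))) as H10.
  pose proof (rdiv_mul_ Q (ldiv (mul (ldiv x one) (mul (rdiv x (rdiv (mul x y) x)) (ldiv (rdiv (rdiv y x) (rdiv (mul x y) x)) one))) one) (ldiv (ldiv x one) one)) as H11.
  pose proof (mul_ldiv Q (rdiv x (rdiv (mul x y) x)) (mul (ldiv x one) (mul (rdiv x (rdiv (mul x y) x)) (ldiv (rdiv (rdiv y x) (rdiv (mul x y) x)) one)))) as H12.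
  pose proof (mul_ldiv Q (ldiv (rdiv x (rdiv (mul x y) x)) (mul (ldiv x one) (mul (rdiv x (rdiv (mul x y) x)) (ldiv (rdiv (rdiv y x) (rdiv (mul x y) x)) one)))) one) as H13.
  pose proof (rdiv_mul_ Q (ldiv (mul (rdiv x (rdiv (mul x y) x)) (ldiv (rdiv (rdiv y x) (rdiv (mul x y) x)) one)) one) (ldiv (rdiv x (rdiv (mul x y) x)) one)) as H14.
  pose proof (rdiv_mul_ Q one (rdiv (rdiv y x) (rdiv (mul x y) x))) as H15.
  pose proof (mul_rdiv Q (rdiv (mul (rdiv y x) x) (rdiv (mul x y) x)) (ldiv (rdiv x (rdiv (mul x y) x)) one)) as H16.
  pose proof (mul_rdiv Q x (ldiv x one)) as H17.
  pose proof (mul_rdiv Q (ldiv (rdiv x (rdiv (mul x y) x)) (mul (ldiv x one) (mul (rdiv x (rdiv (mul x y) x)) (ldiv (rdiv (rdiv y x) (rdiv (mul x y) x)) one)))) (ldiv (ldiv (rdiv x (rdiv (mul x y) x)) (mul (ldiv x one) (mul (rdiv x (rdiv (mul x y) x)) (ldiv (rdiv (rdiv y x) (rdiv (mul x y) x)) one)))) one)) as H18.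
  pose proof (ldiv_mul Q (rdiv one (rdiv (rdiv y x) (rdiv (mul x y) x))) (rdiv (rdiv y x) (rdiv (mul x y) x))) as H19.
  congruence.
Qed.
Lemma id6 (x y : Q) : (rdiv (ldiv (rdiv x (mul x y)) one) (mul (rdiv y (mul x y)) (ldiv (rdiv x (mul x y)) one))) = x.
Proof.
  pose proof (aaip (ldiv y one) (mul (rdiv y (mul x y)) (ldiv (rdiv x (mul x y)) one))) as H0.
  pose proof (aaip (rdiv x (mul x y)) (ldiv (rdiv x (mul x y)) one)) as H1.
  pose proof (aaip (rdiv x (mul x y)) (mul x y)) as H2.
  pose proof (aaip (rdiv y (mul x y)) (ldiv (rdiv x (mul x y)) one)) as H3.
  pose proof (aaip (rdiv y (mul x y)) (mul x y)) as H4.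
  pose proof (inv_inv x) as H5.
  pose proof (inv_inv y) as H6.
  pose proof (id3 (ldiv x one) (ldiv (rdiv x (mul x y)) one) (mul (rdiv y (mul x y)) (ldiv (rdiv x (mul x y)) one))) as H7.
  pose proof (id4 x y (mul x y)) as H8.
  pose proof (id4 (ldiv x one) (mul (rdiv y (mul x y)) (ldiv (rdiv x (mul x y)) one)) (ldiv (rdiv x (mul x y)) one)) as H9.
  pose proof (rdiv_mul_ Q y (mul x y)) as H10.
  pose proof (rdiv_mul_ Q x (mul x y)) as H11.
  pose proof (mul_ldiv Q (rdiv x (mul x y)) one) as H12.
  pose proof (mul_rdiv Q (rdiv y (mul x y)) (ldiv (rdiv x (mul x y)) one)) as H13.
  pose proof (ldiv_mul Q (ldiv y one) (mul (rdiv y (mul x y)) (ldiv (rdiv x (mul x y)) one))) as H14.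
  pose proof (mul_ldiv Q (mul (ldiv y one) (mul (rdiv y (mul x y)) (ldiv (rdiv x (mul x y)) one))) one) as H15.
  pose proof (mul_rdiv Q (rdiv x (mul x y)) (ldiv (rdiv x (mul x y)) one)) as H16.
  pose proof (mul_rdiv Q (ldiv (ldiv (rdiv x (mul x y)) one) one) (ldiv (rdiv x (mul x y)) one)) as H17.
  pose proof (mul_rdiv Q (ldiv (mul x y) one) (ldiv (rdiv x (mul x y)) one)) as H18.
  pose proof (ldiv_mul Q (rdiv y (mul x y)) (mul x y)) as H19.
  pose proof (ldiv_mul Q (ldiv (mul x y) one) (ldiv (rdiv y (mul x y)) one)) as H20.
  pose proof (ldiv_mul Q (ldiv x one) (rdiv (ldiv (rdiv x (mul x y)) one) (mul (rdiv y (mul x y)) (ldiv (rdiv x (mul x y)) one)))) as H21.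
  pose proof (mul_rdiv Q (mul (ldiv x one) (rdiv (ldiv (rdiv x (mul x y)) one) (mul (rdiv y (mul x y)) (ldiv (rdiv x (mul x y)) one)))) (mul (rdiv y (mul x y)) (ldiv (rdiv x (mul x y)) one))) as H22.
  pose proof (rdiv_mul_ Q (mul (mul (ldiv x one) (rdiv (ldiv (rdiv x (mul x y)) one) (mul (rdiv y (mul x y)) (ldiv (rdiv x (mul x y)) one)))) (mul (rdiv y (mul x y)) (ldiv (rdiv x (mul x y)) one))) (ldiv (rdiv x (mul x y)) one)) as H23.
  pose proof (mul_ldiv Q (rdiv (mul (rdiv y (mul x y)) (ldiv (rdiv x (mul x y)) one)) (ldiv (rdiv x (mul x y)) one)) one) as H24.
  pose proof (mul_rdiv Q (mul (ldiv y one) (mul (rdiv y (mul x y)) (ldiv (rdiv x (mul x y)) one))) (ldiv (mul (ldiv y one) (mul (rdiv y (mul x y)) (ldiv (rdiv x (mul x y)) one))) one)) as H25.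
  pose proof (mul_rdiv Q (rdiv y (mul x y)) (ldiv (rdiv y (mul x y)) one)) as H26.
  pose proof (mul_rdiv Q one (mul x y)) as H27.
  pose proof (mul_rdiv Q one (mul (mul (ldiv x one) (rdiv (ldiv (rdiv x (mul x y)) one) (mul (rdiv y (mul x y)) (ldiv (rdiv x (mul x y)) one)))) (mul (rdiv y (mul x y)) (ldiv (rdiv x (mul x y)) one)))) as H28.
  pose proof (ldiv_mul Q (rdiv (mul x y) (mul x y)) one) as H29.
  pose proof (mul1l Q (ldiv (ldiv y one) (mul (ldiv y one) (mul (rdiv y (mul x y)) (ldiv (rdiv x (mul x y)) one))))) as H30.
  pose proof (mul1r Q (mul (rdiv y (mul x y)) (ldiv (rdiv y (mul x y)) one))) as H31.
  pose proof (mul1l Q (ldiv (rdiv y (mul x y)) (mul (rdiv y (mul x y)) (mul x y)))) as H32.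
  pose proof (mul1l Q (ldiv (ldiv (mul x y) one) (mul (ldiv (mul x y) one) (ldiv (rdiv y (mul x y)) one)))) as H33.
  congruence.
Qed.
End S.

Theorem lemma3p2 (Q : loop) (HQ : automorphic Q) (x y z : Q) :
  let inv := @linv Q in
  let t := rdiv (mul x y) x in
  (* (1) *)
  mul (inv (rdiv x (inv (rdiv x y)))) (rdiv x y)
    = mul (inv (rdiv x y)) (inv y)
  (* (2) *)
  /\ mul (inv (rdiv (inv (rdiv x (mul x y))) (inv x))) x
    = rdiv x (mul y x)
  (* (3) *)
  /\ rdiv (mul (mul x (rdiv y z)) z) y
    = mul (rdiv (mul x z) y) (inv (rdiv z y))
  (* (4) *)
  /\ mul (rdiv (mul x y) z) (inv (rdiv y z))
    = mul (mul (rdiv x z) (inv (rdiv y z))) y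
  (* (5) *)
  /\ mul (inv x) (mul (rdiv x t) (inv (rdiv (rdiv y x) t)))
    = mul (rdiv x t) (inv (rdiv y t))
  (* (6) *)
  /\ rdiv (inv (rdiv x (mul x y)))
          (mul (rdiv y (mul x y)) (inv (rdiv x (mul x y))))
    = x.
Proof.
  intros inv t. subst inv t. unfold linv.
  split; [apply id1; exact HQ|].
  split; [apply id2; exact HQ|].
  split; [apply id3; exact HQ|].
  split; [apply id4; exact HQ|].
  split; [apply id5; exact HQ|].
  apply id6; exact HQ.
Qed.
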